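(* Let $\lambda_{\max}>1$ and let $F:[0,\lambda_{\max}]\to\mathbb{R}_+$ be continuously differentiable with $F(0)=0$, such that $F(x)<F^\star$ for all $x\in[0,1)$, $F'(1)>0$, and $F$ is not concave-like. For $U\ge0$ define the dual function $$q(U)=\inf_{\alpha}\big\{\mathbb{E}_\alpha[-F(X)+UX]-U\big\},$$ the infimum over probability measures $\alpha$ on $[0,\lambda_{\max}]$ (with $X\sim\alpha$). Let $U^\star$ be an optimal solution of $\max_{U\ge0}q(U)$. Then $q(U^\star)=\max_{U\ge0}q(U)=-F^\star$, and there exists $L>0$ such that $$q(U^\star)\ge q(U)+L|U^\star-U|\quad\text{for all }U\ge0.$$
   Context: $F^\star=\sup\{\mathbb{E}_\alpha[F(X)]:\alpha$ a probability measure on $[0,\lambda_{\max}]$, $X\sim\alpha$, $\mathbb{E}_\alpha[X]\le1\}$. $F$ is concave-like if for all $x_1,x_2\in[0,\lambda_{\max}]\setminus\{1\}$, $p\in(0,1)$ with $px_1+(1-p)x_2=1$, we have $F(1)>pF(x_1)+(1-p)F(x_2)$. *)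

(* Defs.v *)
From mathcomp Require Import all_boot all_algebra.
From mathcomp Require Import all_classical all_reals all_analysis.
Import GRing.Theory Num.Theory numFieldNormedType.Exports.
Local Open Scope ring_scope.
Local Open Scope classical_set_scope.

Definition Idom {R : realType} (lmax : R) : set R := `[0%R, lmax].

Definition prob_on {R : realType} (lmax : R) (alpha : probability R R) : Prop :=
  alpha (Idom lmax) = 1%E.

Definition Ealpha {R : realType} (lmax : R) (alpha : probability R R) (g : R -> R)
  : \bar R := (\int[alpha]_(x in Idom lmax) (g x)%:E)%E.

Definition Fstar {R : realType} (lmax : R) (F : R -> R) : \bar R :=
  ereal_sup [set Ealpha lmax alpha F | alpha in
     [set alpha : probability R R | prob_on lmax alpha /\
                                    (Ealpha lmax alpha id <= 1%:E)%E]].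

Definition qdual {R : realType} (lmax : R) (F : R -> R) (U : R) : \bar R :=
  ereal_inf [set (Ealpha lmax alpha (fun x => (- F x + U * x)%R) - U%:E)%E | alpha in
     [set alpha : probability R R | prob_on lmax alpha]].

Definition concave_like {R : realType} (lmax : R) (F : R -> R) : Prop :=
  forall x1 x2 p : R,
    x1 \in Idom lmax -> x2 \in Idom lmax -> x1 != 1 -> x2 != 1 ->
    0 < p < 1 -> p * x1 + (1 - p) * x2 = 1 ->
    F 1 > p * F x1 + (1 - p) * F x2.

(* F is continuously differentiable on the closed interval [a, b]:
   continuous on [a,b], differentiable on (a,b), and its derivative extends to
   a continuous function on [a,b] (equivalently, one-sided derivatives at the
   endpoints exist and F' is continuous on [a,b]). *)
Definition C1_on {R : realType} (a b : R) (F : R -> R) : Prop :=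
  {within `[a, b], continuous F} /\
  (forall x, a < x < b -> derivable F x 1) /\
  exists G : R -> R, {within `[a, b], continuous G} /\
                     forall x, a < x < b -> F^`() x = G x.

(* Main.v *)
From HB Require Import structures.
From mathcomp Require Import all_boot all_algebra.
From mathcomp Require Import all_classical all_reals all_analysis.
Require Import Defs.
From mathcomp Require Import measurable_realfun.
From mathcomp Require Import ring lra.
Import GRing.Theory Num.Theory numFieldNormedType.Exports.
Import order.Order.TTheory.

Local Open Scope ring_scope.
Local Open Scope classical_set_scope.

Section mix.
Context {R : realType} (a b p : R) (p0 : 0 <= p) (p1 : p <= 1).
Lemma mix_q0 : 0 <= 1 - p. Proof. by rewrite subr_ge0. Qed.
Definition mixm : set R -> \bar R :=
  measure_add (mscale (NngNum p0) (@dirac _ R a R)) (mscale (NngNum mix_q0) (@dirac _ R b R)).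
Let mix0 : mixm set0 = 0%E. Proof. exact: measure0. Qed.
Let mix_ge0 A : (0 <= mixm A)%E. Proof. exact: measure_ge0. Qed.
Let mix_sa : semi_sigma_additive mixm. Proof. exact: measure_semi_sigma_additive. Qed.
HB.instance Definition _ := isMeasure.Build _ _ _ mixm mix0 mix_ge0 mix_sa.
Let mixT : mixm setT = 1%E.
Proof. rewrite /mixm measure_addE; change ((p%:E * \d_a setT) + ((1-p)%:E * \d_b setT) = 1)%E. by rewrite !diracE !in_setT !mule1 -EFinD addrC subrK. Qed.
HB.instance Definition _ := Measure_isProbability.Build _ _ _ mixm mixT.
Lemma mixE A : mixm A = (p%:E * \d_a A + (1-p)%:E * \d_b A)%E.
Proof. by rewrite /mixm measure_addE. Qed.

Lemma mix_int (D : set R) (f : R -> R) : measurable D -> D a -> D b ->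
  measurable_fun D f -> (forall x, D x -> 0 <= f x) ->
  (\int[mixm]_(x in D) (f x)%:E = (p * f a + (1 - p) * f b)%:E)%E.
Proof.
move=> mD Da Db mf f0.
have -> : (\int[mixm]_(x in D) (f x)%:E = \int[measure_add (mscale (NngNum p0) (@dirac _ R a R)) (mscale (NngNum mix_q0) (@dirac _ R b R))]_(x in D) (f x)%:E)%E by [].
have mfE : measurable_fun D (EFin \o f) by exact/measurable_EFinP.
have f0E : forall x, D x -> (0 <= (f x)%:E)%E by move=> x Dx; rewrite lee_fin f0.
rewrite ge0_integral_measure_add // ?ge0_integral_mscale // ?integral_dirac //.
by rewrite !diracE !mem_set // !mul1e -!EFinM -EFinD.
Qed.
End mix.


Section aux.
Context {R : realType} (lmax : R).
Local Notation D := (Idom lmax).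
Lemma mD : measurable D. Proof. exact: measurable_itv. Qed.
Lemma cD : compact D. Proof. exact: segment_compact. Qed.

Lemma cont_int (mu : probability R R) (f : R -> R) :
  {within D, continuous f} -> mu.-integrable D (EFin \o f).
Proof.
move=> cf; apply: measurable_bounded_integrable.
- exact: mD.
- by rewrite (le_lt_trans (probability_le1 _ mD)) // ltry.
- exact: subspace_continuous_measurable_fun mD cf.
- have /compact_bounded[M [_ mrt]] := continuous_compact cf cD.
  by exists M; split; rewrite ?num_real // => ? ? ? ?; exact: mrt.
Qed.

Lemma wcont_cst (c : R) : {within D, continuous (fun _ : R => c)}.
Proof. apply: continuous_subspaceT => x; exact: cvg_cst. Qed.

Lemma E_ge (alpha : probability R R) (f : R -> R) (c : R) :
  prob_on lmax alpha -> {within D, continuous f} -> (forall x, D x -> c <= f x) ->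
  (c%:E <= Ealpha lmax alpha f)%E.
Proof.
move=> Pa cf fc; rewrite /Ealpha; rewrite /prob_on in Pa.
have -> : c%:E = (\int[alpha]_(x in D) (cst c%:E) x)%E.
  by rewrite (integral_cst alpha mD) [X in (_ * X)%E](_ : _ = 1%E) ?mule1.
apply: le_integral => //; first exact: mD.
- exact: (cont_int alpha _ (wcont_cst c)).
- exact: cont_int.
- by move=> x /[!inE] Dx; rewrite lee_fin fc.
Qed.

Lemma E_le (alpha : probability R R) (f : R -> R) (c : R) :
  prob_on lmax alpha -> {within D, continuous f} -> (forall x, D x -> f x <= c) ->
  (Ealpha lmax alpha f <= c%:E)%E.
Proof.
move=> Pa cf fc; rewrite /Ealpha; rewrite /prob_on in Pa.
have -> : c%:E = (\int[alpha]_(x in D) (cst c%:E) x)%E.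
  by rewrite (integral_cst alpha mD) [X in (_ * X)%E](_ : _ = 1%E) ?mule1.
apply: le_integral => //; first exact: mD.
- exact: cont_int.
- exact: (cont_int alpha _ (wcont_cst c)).
- by move=> x /[!inE] Dx; rewrite lee_fin fc.
Qed.

Lemma E_dirac (c : R) (f : R -> R) : D c -> {within D, continuous f} ->
  Ealpha lmax (@dirac _ R c R) f = (f c)%:E.
Proof.
move=> Dc cf; rewrite /Ealpha integral_dirac; first last.
- apply/measurable_EFinP; exact: subspace_continuous_measurable_fun mD cf.
- exact: mD.
change ((\1_D c)%:E * (f c)%:E = (f c)%:E)%E.
by rewrite indicE mem_set // mul1e.
Qed.

Lemma prob_on_dirac (c : R) : D c -> prob_on lmax (@dirac _ R c R).
Proof. by move=> Dc; rewrite /prob_on; change (((\1_D c : R))%:E = 1%E); rewrite indicE mem_set. Qed.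

End aux.

Section c.
Context {R : realType} (lmax : R).
Local Notation D := (Idom lmax).
Lemma wcontD (f g : R -> R) : {within D, continuous f} -> {within D, continuous g} ->
  {within D, continuous (fun x => f x + g x)}.
Proof. move=> cf cg x; exact: (cvgD (cf x) (cg x)). Qed.
Lemma wcontN (f : R -> R) : {within D, continuous f} -> {within D, continuous (fun x => - f x)}.
Proof. move=> cf x; exact: (cvgN (cf x)). Qed.
Lemma wcont_lin (c k : R) : {within D, continuous (fun x => k * (c - x))}.
Proof. apply: continuous_subspaceT => x; apply: cvgM; [exact: cvg_cst|]. apply: cvgB; [exact: cvg_cst| exact: cvg_id]. Qed.
Lemma wcont_mul (k : R) : {within D, continuous (fun x => k * x)}.
Proof. apply: continuous_subspaceT => x; apply: cvgM; [exact: cvg_cst| exact: cvg_id]. Qed.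
Lemma wcont_id : {within D, continuous (@id R)}.
Proof. apply: continuous_subspaceT => x; exact: cvg_id. Qed.
End c.

Section main.
Context {R : realType} (lmax : R) (F : R -> R).
Local Notation D := (Idom lmax).
Definition gU (U x : R) := F x + U * (1 - x).

Lemma wcont_g U : {within D, continuous F} -> {within D, continuous (gU U)}.
Proof. move=> cF; rewrite /gU; exact: (wcontD lmax _ _ cF (wcont_lin lmax 1 U)). Qed.

Lemma wcont_h U : {within D, continuous F} -> {within D, continuous (fun x => - F x + U * x)}.
Proof. move=> cF; exact: (wcontD lmax _ _ (wcontN lmax _ cF) (wcont_mul lmax U)). Qed.

Lemma q_le U c : {within D, continuous F} -> D c -> (qdual lmax F U <= (- gU U c)%:E)%E.
Proof.
move=> cF Dc; apply: ge_ereal_inf.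
exists (Ealpha lmax (@dirac _ R c R) (fun x => (- F x + U * x)%R) - U%:E)%E.
  by exists (@dirac _ R c R) => //; exact: prob_on_dirac.
rewrite E_dirac //; last exact: wcont_h.
by rewrite -EFinB lee_fin /gU; lra.
Qed.

Lemma q_ge U c : {within D, continuous F} -> D c -> (forall t, D t -> gU U t <= gU U c) ->
  ((- gU U c)%:E <= qdual lmax F U)%E.
Proof.
move=> cF Dc Hc; apply/ereal_infP => _ [alpha Pa <-].
have h1 : ((U - gU U c)%:E <= Ealpha lmax alpha (fun x => (- F x + U * x)%R))%E.
  apply: E_ge => //; first exact: wcont_h.
  by move=> x Dx; have := Hc x Dx; rewrite /gU; lra.
rewrite leeBrDr // -EFinD; apply: le_trans h1; rewrite lee_fin; lra.
Qed.

Lemma E_mono (alpha : probability R R) (f g : R -> R) :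
  prob_on lmax alpha -> {within D, continuous f} -> {within D, continuous g} ->
  (forall x, D x -> f x <= g x) -> (Ealpha lmax alpha f <= Ealpha lmax alpha g)%E.
Proof.
move=> Pa cf cg fg; apply: le_integral => //; first exact: mD lmax.
- exact: cont_int.
- exact: cont_int.
- by move=> x /[!inE] Dx; rewrite lee_fin fg.
Qed.

Lemma E_aff (alpha : probability R R) (c k : R) : prob_on lmax alpha ->
  Ealpha lmax alpha (fun x => c + k * x) = (c%:E + k%:E * Ealpha lmax alpha id)%E.
Proof.
move=> Pa; rewrite /Ealpha.
have iid := cont_int lmax alpha _ (wcont_id lmax).
have icst := cont_int lmax alpha _ (wcont_cst lmax c).
under eq_integral do rewrite EFinD EFinM.
rewrite (integralD (mD lmax) icst (integrableZl (mD lmax) k iid)).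
rewrite (integralZl (mD lmax) iid).
by rewrite (integral_cst alpha (mD lmax)) [X in (_ * X)%E](_ : _ = 1%E) ?mule1.
Qed.


Lemma nc_pair U phi : ~ concave_like lmax F -> gU U 1 = phi ->
  (forall t, D t -> gU U t <= phi) ->
  exists a b, (D a /\ D b) /\ [/\ a < 1, 1 < b, gU U a = phi & gU U b = phi].
Proof.
move=> hnc g1 gle.
case: (pselect (exists a b, (D a /\ D b) /\ [/\ a < 1, 1 < b, gU U a = phi & gU U b = phi])) => // Hn.
exfalso; apply: hnc => x1 x2 p Dx1 Dx2 n1 n2 /andP[p0 p1] mean.
move/set_mem: Dx1 => Dx1; move/set_mem: Dx2 => Dx2.
rewrite ltNge; apply/negP => Hle.
have gx1 := gle _ Dx1; have gx2 := gle _ Dx2.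
have F1 : F 1 = phi by rewrite -g1 /gU subrr mulr0 addr0.
have z : p * (1 - x1) + (1 - p) * (1 - x2) = 0 by lra.
have e : p * gU U x1 + (1 - p) * gU U x2 = p * F x1 + (1 - p) * F x2.
  rewrite /gU.
  have -> : p * (F x1 + U * (1 - x1)) + (1 - p) * (F x2 + U * (1 - x2)) =
    p * F x1 + (1 - p) * F x2 + U * (p * (1 - x1) + (1 - p) * (1 - x2)) by ring.
  by rewrite z mulr0 addr0.
have e1 : gU U x1 = phi by nra.
have e2 : gU U x2 = phi by nra.
move: n1; rewrite neq_lt => /orP[h1|h1].
- have h2 : 1 < x2 by nra.
  by apply: Hn; exists x1, x2; split; split.
- have h2 : x2 < 1 by nra.
  by apply: Hn; exists x2, x1; split; split.
Qed.


Lemma sub01 : 1 <= lmax -> `[0, 1] `<=` D.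
Proof.
move=> l1 x; rewrite /Idom /= !in_itv /= => /andP[h1 h2]; apply/andP; split; lra.
Qed.

Lemma sub1l : `[1, lmax] `<=` D.
Proof.
move=> x; rewrite /Idom /= !in_itv /= => /andP[h1 h2]; apply/andP; split; lra.
Qed.

Lemma claimA U phi : 0 <= U -> 1 < lmax -> {within D, continuous F} ->
  (forall t, D t -> gU U t <= phi) ->
  (forall V, 0 <= V -> exists2 t, D t & phi <= gU V t) ->
  exists2 a, D a & a <= 1 /\ gU U a = phi.
Proof.
move=> U0 l1 cF gle hopt.
case: (pselect (exists2 a, D a & a <= 1 /\ gU U a = phi)) => // Hn; exfalso.
have cg1 : {within `[0, 1], continuous (gU U)}.
  apply: continuous_subspaceW (wcont_g U cF); apply: sub01; lra.
have [m Hm1 Hm] := EVT_max ler01 cg1.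
have Dm : D m by apply: (sub01 (ltW l1)); exact: Hm1.
have m1 : m <= 1 by move: Hm1; rewrite in_itv /= => /andP[].
have glt : gU U m < phi.
  rewrite lt_neqAle gle // andbT; apply/negP => /eqP e; apply: Hn; exists m => //.
set eps := phi - gU U m.
have eps0 : 0 < eps by rewrite /eps; lra.
have [t Dt Ht] : exists2 t, D t & phi <= gU (U + eps / 2) t by apply: hopt; lra.
have e : gU (U + eps / 2) t = gU U t + eps / 2 * (1 - t) by rewrite /gU; ring.
have t0 : 0 <= t by move: Dt; rewrite /Idom /= in_itv /= => /andP[].
have gt := gle _ Dt.
case: (leP t 1) => ht.
- have : gU U t <= gU U m by apply: Hm; rewrite in_itv /=; apply/andP; split.
  have : 0 <= eps * t by apply: mulr_ge0; lra.
  rewrite /eps in eps0 e *; lra.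
- have : 0 < eps * (t - 1) by apply: mulr_gt0; lra.
  rewrite /eps in eps0 e *; lra.
Qed.


Lemma claimB U phi : 0 < U -> 1 < lmax -> {within D, continuous F} ->
  (forall t, D t -> gU U t <= phi) ->
  (forall V, 0 <= V -> exists2 t, D t & phi <= gU V t) ->
  exists2 b, D b & 1 <= b /\ gU U b = phi.
Proof.
move=> U0 l1 cF gle hopt.
case: (pselect (exists2 b, D b & 1 <= b /\ gU U b = phi)) => // Hn; exfalso.
have cg1 : {within `[1, lmax], continuous (gU U)}.
  apply: continuous_subspaceW (wcont_g U cF); exact: sub1l.
have [m Hm1 Hm] := EVT_max (ltW l1) cg1.
have Dm : D m by apply: sub1l; exact: Hm1.
have m1 : 1 <= m by move: Hm1; rewrite in_itv /= => /andP[].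
have glt : gU U m < phi.
  rewrite lt_neqAle gle // andbT; apply/negP => /eqP e; apply: Hn; exists m => //.
set eps := phi - gU U m.
have eps0 : 0 < eps by rewrite /eps; lra.
have [del [d0 dU de]] : exists del, [/\ 0 < del, del <= U & del * lmax <= eps].
  case: (leP (U * lmax) eps) => h.
  - by exists U; split => //; lra.
  - exists (eps / lmax); split.
    + apply: divr_gt0; lra.
    + rewrite ler_pdivrMr; lra.
    + rewrite mulfVK; lra.
have [t Dt Ht] : exists2 t, D t & phi <= gU (U - del) t by apply: hopt; lra.
have e : gU (U - del) t = gU U t + del * (t - 1) by rewrite /gU; ring.
have [t0 tl] : 0 <= t /\ t <= lmax by move: Dt; rewrite /Idom /= in_itv /= => /andP[].
have gt := gle _ Dt.
case: (ltP t 1) => ht.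
- have : 0 < del * (1 - t) by apply: mulr_gt0; lra.
  lra.
- have : gU U t <= gU U m by apply: Hm; rewrite in_itv /=; apply/andP; split.
  have : del * (t - 1) <= del * (lmax - 1) by apply: ler_wpM2l; lra.
  rewrite /eps in eps0 de *; lra.
Qed.


Lemma argmax U : 0 <= lmax -> {within D, continuous F} ->
  exists2 c, D c & forall t, D t -> gU U t <= gU U c.
Proof.
move=> l0 cF; have [c Hc1 Hc] := EVT_max l0 (wcont_g U cF).
by exists c.
Qed.

End main.

Lemma prob_on_mix {R : realType} (lmax a b p : R) (p0 : 0 <= p) (p1 : p <= 1) :
  Idom lmax a -> Idom lmax b -> prob_on lmax (mixm a b p p0 p1).
Proof.
move=> Da Db; rewrite /prob_on.
transitivity (mixm a b p p0 p1 (Idom lmax)); first by [].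
rewrite mixE.
change ((p%:E * (\1_(Idom lmax) a : R)%:E) + ((1-p)%:E * (\1_(Idom lmax) b : R)%:E) = 1)%E.
by rewrite !indicE !mem_set // !mule1 -EFinD addrC subrK.
Qed.





Theorem theorem5p5 (R : realType) (lmax : R) (F : R -> R) (Ustar : R) :
  1 < lmax ->
  C1_on 0 lmax F ->
  (forall x, x \in Idom lmax -> 0 <= F x) ->
  F 0 = 0 ->
  (forall x, 0 <= x < 1 -> ((F x)%:E < Fstar lmax F)%E) ->
  0 < F^`() 1 ->
  ~ concave_like lmax F ->
  0 <= Ustar ->
  (forall U, 0 <= U -> (qdual lmax F U <= qdual lmax F Ustar)%E) ->
  qdual lmax F Ustar = (- Fstar lmax F)%E /\
  exists L : R, 0 < L /\
    forall U, 0 <= U ->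
      (qdual lmax F U + (L * `|Ustar - U|)%:E <= qdual lmax F Ustar)%E.
Proof.
move=> l1 [cF0 _] Fge0 _ _ _ hnc U0 hopt.
have cF : {within Idom lmax, continuous F} := cF0.
have l0 : 0 <= lmax by lra.
have D1 : Idom lmax 1 by rewrite /Idom /= in_itv /=; apply/andP; split; lra.
have Dl : Idom lmax lmax by rewrite /Idom /= in_itv /=; apply/andP; split; lra.
have [cs Dcs Hcs] := argmax lmax F Ustar l0 cF.
set phi := gU F Ustar cs.
have qs : qdual lmax F Ustar = (- phi)%:E.
  by apply/eqP; rewrite eq_le (@q_le _ lmax F Ustar cs cF Dcs) (@q_ge _ lmax F Ustar cs cF Dcs Hcs).
have gle : forall t, Idom lmax t -> gU F Ustar t <= phi := Hcs.
have hopt' : forall V, 0 <= V -> exists2 t, Idom lmax t & phi <= gU F V t.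
  move=> V V0; have [c Dc Hc] := argmax lmax F V l0 cF; exists c => //.
  have h1 := @q_ge _ lmax F V c cF Dc Hc.
  have h2 := hopt V V0; rewrite qs in h2.
  have := le_trans h1 h2; rewrite lee_fin; lra.
have [a Da [a1 ga]] : exists2 a, Idom lmax a & a < 1 /\ gU F Ustar a = phi.
  have [a0 Da0 [a01 ga0]] := @claimA _ lmax F Ustar phi U0 l1 cF gle hopt'.
  case: (ltP a0 1) => h; first by exists a0.
  have a0e : a0 = 1 by apply/le_anti; rewrite a01 h.
  rewrite a0e in ga0.
  have [a [b [[Da Db] [ab1 b1 gaa gbb]]]] := @nc_pair _ lmax F Ustar phi hnc ga0 gle.
  by exists a.
have [b Db [b1 gb]] : exists2 b, Idom lmax b & 1 < b /\ (0 < Ustar -> gU F Ustar b = phi).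
  case: (leP Ustar 0) => hU.
  - exists lmax => //; split => // h; lra.
  - have [b0 Db0 [b01 gb0]] := @claimB _ lmax F Ustar phi hU l1 cF gle hopt'.
    case: (ltP 1 b0) => h; first by exists b0.
    have b0e : b0 = 1 by apply/le_anti; rewrite b01 h.
    rewrite b0e in gb0.
    have [a' [b [[Da' Db] [ab1 b1 gaa gbb]]]] := @nc_pair _ lmax F Ustar phi hnc gb0 gle.
    by exists b.
have mF : measurable_fun (Idom lmax) F.
  exact: subspace_continuous_measurable_fun (mD lmax) cF.
have mid : measurable_fun (Idom lmax) (@id R) by [].
have F0 : forall x, Idom lmax x -> 0 <= F x by move=> x Dx; apply: Fge0; rewrite inE.
have id0 : forall x, Idom lmax x -> 0 <= id x.
  by move=> x; rewrite /Idom /= in_itv /= => /andP[].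
have Fs : Fstar lmax F = phi%:E.
  apply/eqP; rewrite eq_le; apply/andP; split.
  - apply/ereal_supP => _ [alpha [Pa Ex] <-].
    have h1 : (Ealpha lmax alpha F <= Ealpha lmax alpha (fun x => ((phi - Ustar) + Ustar * x)%R))%E.
      apply: E_mono => //.
        exact: (wcontD lmax _ _ (wcont_cst lmax _) (wcont_mul lmax Ustar)).
      by move=> x Dx; have := gle x Dx; rewrite /gU; lra.
    rewrite E_aff // in h1; apply: le_trans h1 _.
    have h2 : (Ustar%:E * Ealpha lmax alpha id <= Ustar%:E * 1%:E)%E.
      by apply: lee_wpmul2l; rewrite ?lee_fin.
    apply: le_trans (leeD2l _ h2) _; rewrite -EFinM -EFinD lee_fin; lra.
  - apply: le_ereal_sup_tmp.
    case: (leP Ustar 0) => hU.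
    + have U00 : Ustar = 0 by lra.
      exists (Ealpha lmax (@dirac _ R a R) F).
        exists (@dirac _ R a R) => //; split; first exact: prob_on_dirac.
        by rewrite E_dirac // ?lee_fin; [lra | exact: wcont_id].
      rewrite E_dirac // lee_fin -ga /gU U00; lra.
    + have gb' := gb hU.
      have ba : 0 < b - a by lra.
      set p := (b - 1) / (b - a).
      have p0 : 0 <= p by apply: divr_ge0; lra.
      have p1 : p <= 1 by rewrite /p ler_pdivrMr //; lra.
      have pa : p * a + (1 - p) * b = 1.
        rewrite /p; field; lra.
      exists (Ealpha lmax (mixm a b p p0 p1) F).
        exists (mixm a b p p0 p1) => //; split; first exact: prob_on_mix.
        rewrite /Ealpha mix_int //; first by rewrite pa.
        exact: mD.
      rewrite /Ealpha mix_int //; last exact: mD.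
      rewrite lee_fin; move: ga gb'; rewrite /gU => ga gb'.
      have : p * (1 - a) + (1 - p) * (1 - b) = 0 by lra.
      nra.
split; first by rewrite qs Fs.
have [L [L0 La Lb]] : exists L, [/\ 0 < L, L <= 1 - a & L <= b - 1].
  case: (leP (1 - a) (b - 1)) => h.
  - by exists (1 - a); split => //; lra.
  - by exists (b - 1); split => //; lra.
exists L; split => // U UU0.
rewrite qs; case: (leP Ustar U) => hU.
- have h := @q_le _ lmax F U a cF Da; apply: le_trans (leeD2r _ h) _.
  rewrite -EFinD lee_fin ler0_norm; last lra.
  have : 0 <= (1 - a - L) * (U - Ustar) by apply: mulr_ge0; lra.
  move: ga; rewrite /gU => ga; lra.
- have gb' : gU F Ustar b = phi by apply: gb; lra.
  have h := @q_le _ lmax F U b cF Db; apply: le_trans (leeD2r _ h) _.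
  rewrite -EFinD lee_fin gtr0_norm; last lra.
  have : 0 <= (b - 1 - L) * (Ustar - U) by apply: mulr_ge0; lra.
  move: gb'; rewrite /gU => gb'; lra.
Qed.
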